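(* Fix integers $q\ge 2$, $k\ge 3$, $l\in\{1,\dots,k-1\}$ and $r$ with $3\le r\le k$, and let $u(n)$ satisfy $u(n)\to\infty$ and $u(n)/n\to 0$. Suppose that every local function $f_a\colon[q]^k\to[q]^l$ used in the generator is surjective and $(r-1)$-wise independent. Let $\mu$ be any constant with $0<\mu<\mu_{\mathrm c}(k,r):=\binom{k}{r}^{-1}\frac{(r-2)^{r-2}}{r(r-1)^{r-1}}$, and let $m=\lfloor \mu\, n^{r-1}/u(n)^{r-2}\rfloor$. Then there is a constant $c>0$ such that for all sufficiently large $n$, with probability at least $1-e^{-c\,u(n)}$ (over the random generator and the planted input), the linear program (LP) below has a zero-optimal solution whose integral part has fewer than $\bigl(1+\frac{1}{r-2}\bigr)u(n)$ elements; i.e. the LP relaxation cannot fix $\frac{1}{r-2}u(n)$ input variables beyond the $u(n)$ known ones.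
   Context: Random generalized Goldreich generator: $[q]=\{1,\dots,q\}$. For each $a\in[m]$ a (deterministic) function $f_a\colon[q]^k\to[q]^l$ is fixed. For each $a\in[m]$ independently, a $k$-tuple $(i^{(a)}_1,\dots,i^{(a)}_k)$ of pairwise distinct elements of $[n]$ is chosen uniformly among all $n(n-1)\cdots(n-k+1)$ such tuples; write $\partial(a)=\{i^{(a)}_1,\dots,i^{(a)}_k\}$ and $\bm x^{(a)}=(x_{i^{(a)}_1},\dots,x_{i^{(a)}_k})$. A planted input $\bm x^*$ is chosen uniformly from $[q]^n$, independently, and $\bm y_a:=f_a(\bm x^{*(a)})$ for $a\in[m]$. $(r-1)$-wise independence: if $X_1,\dots,X_k$ are i.i.d. uniform on $[q]$, then for every $T\subseteq[k]$ with $|T|\le r-1$ the joint distribution of $((X_i)_{i\in T}, f(X_1,\dots,X_k))$ is uniform on $[q]^{|T|}\times[q]^l$. The LP (local marginal polytope relaxation with the first $u(n)$ variables fixed to planted values): the variables are probability distributions $b_i$ on $[q]$ for $i\in[n]$ and $b_{(a)}$ on $[q]^k$ for $a\in[m]$, subject to (i) for every $a\in[m]$ and every position $s\in[k]$, the marginal of $b_{(a)}$ on its $s$-th coordinate equals $b_{i^{(a)}_s}$; (ii) $b_i(x^*_i)=1$ for $i=1,\dots,u(n)$. The objective to minimize is $\sum_{a=1}^m\sum_{\bm x\in[q]^k} b_{(a)}(\bm x)\,\mathbb I\{f_a(\bm x)\ne\bm y_a\}$. A zero-optimal solution is a feasible point with objective value $0$ (one exists, given by the planted assignment). The integral part of a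 feasible point is $\{i\in[n]:\exists x\in[q],\ b_i(x)=1\}$. *)

(* Defs.v *)
From Stdlib Require Import Reals ZArith.
From mathcomp Require Import all_boot.

Set Implicit Arguments.
Unset Strict Implicit.
Unset Printing Implicit Defensive.

Local Open Scope R_scope.

Definition Rsum (I : finType) (P : pred I) (F : I -> R) : R :=
  \big[Rplus/0]_(i | P i) F i.

Definition surj_loc (q k l : nat)
  (f : {ffun 'I_k -> 'I_q} -> {ffun 'I_l -> 'I_q}) : Prop :=
  forall y, exists x, f x = y.

(* t-wise independence: for X uniform on [q]^k and every T with |T| <= t,
   ((X_i)_{i in T}, f X) is uniform on [q]^|T| x [q]^l, i.e. for every
   assignment z (only its values on T matter) and output y,
     #{x | x_T = z_T, f x = y} / q^k = q^{-|T|} q^{-l}. *)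
Definition wise_indep (q k l t : nat)
  (f : {ffun 'I_k -> 'I_q} -> {ffun 'I_l -> 'I_q}) : Prop :=
  forall (T : {set 'I_k}), (#|T| <= t)%N ->
  forall (z : {ffun 'I_k -> 'I_q}) (y : {ffun 'I_l -> 'I_q}),
    (#|[set x : {ffun 'I_k -> 'I_q} |
          [forall i in T, x i == z i] && (f x == y)]| * q ^ #|T| * q ^ l
     = q ^ k)%N.

Definition mu_c (k r : nat) : R :=
  / INR 'C(k, r) * (INR (r - 2) ^ (r - 2) / (INR r * INR (r - 1) ^ (r - 1))).

Definition m_of (mu : R) (r : nat) (u : nat -> nat) (n : nat) : nat :=
  Z.to_nat (Int_part (mu * INR n ^ (r - 1) / INR (u n) ^ (r - 2))).

(* Sample space: for each a in [m] a k-tuple of pairwise distinct elements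
   of [n] (an injective map [k] -> [n]), together with the planted input
   x* in [q]^n.  The product of uniform measures is the uniform measure on
   this finite set. *)
Definition sample_space (q n k m : nat) :
  {set {ffun 'I_m -> {ffun 'I_k -> 'I_n}} * {ffun 'I_n -> 'I_q}} :=
  [set w : {ffun 'I_m -> {ffun 'I_k -> 'I_n}} * {ffun 'I_n -> 'I_q} | [forall a : 'I_m, injectiveb (w.1 a)]].

Definition restrict (q n k : nat) (x : {ffun 'I_n -> 'I_q})
  (t : {ffun 'I_k -> 'I_n}) : {ffun 'I_k -> 'I_q} :=
  [ffun s => x (t s)].

Definition lp_feasible (q n k m u : nat)
  (tup : {ffun 'I_m -> {ffun 'I_k -> 'I_n}}) (xs : {ffun 'I_n -> 'I_q})
  (bv : 'I_n -> 'I_q -> R) (bc : 'I_m -> {ffun 'I_k -> 'I_q} -> R) : Prop :=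
  (forall i x, 0 <= bv i x) /\
  (forall i, Rsum predT (bv i) = 1) /\
  (forall a x, 0 <= bc a x) /\
  (forall a, Rsum predT (bc a) = 1) /\
  (forall a (s : 'I_k) (z : 'I_q),
      Rsum (fun x : {ffun 'I_k -> 'I_q} => x s == z) (bc a) = bv (tup a s) z) /\
  (forall i : 'I_n, (i < u)%N -> bv i (xs i) = 1).

Definition lp_objective (q n k l m : nat)
  (F : nat -> {ffun 'I_k -> 'I_q} -> {ffun 'I_l -> 'I_q})
  (tup : {ffun 'I_m -> {ffun 'I_k -> 'I_n}}) (xs : {ffun 'I_n -> 'I_q})
  (bc : 'I_m -> {ffun 'I_k -> 'I_q} -> R) : R :=
  Rsum predT (fun a : 'I_m =>
    Rsum predT (fun x : {ffun 'I_k -> 'I_q} =>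
      bc a x * (if F (nat_of_ord a) x != F (nat_of_ord a) (restrict xs (tup a))
                then 1 else 0))).

Definition in_integral_part (q n : nat) (bv : 'I_n -> 'I_q -> R) (i : 'I_n) : Prop :=
  exists x, bv i x = 1.

Definition lp_small_zero_opt (q n k l m u : nat)
  (F : nat -> {ffun 'I_k -> 'I_q} -> {ffun 'I_l -> 'I_q})
  (tup : {ffun 'I_m -> {ffun 'I_k -> 'I_n}}) (xs : {ffun 'I_n -> 'I_q})
  (bound : R) : Prop :=
  exists (bv : 'I_n -> 'I_q -> R) (bc : 'I_m -> {ffun 'I_k -> 'I_q} -> R),
    lp_feasible u tup xs bv bc /\
    lp_objective F tup xs bc = 0 /\
    exists S : {set 'I_n},
      (forall i, in_integral_part bv i <-> i \in S) /\ INR #|S| < bound.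

(* Main.v *)
Require Import Defs.
From HB Require Import structures.
From Stdlib Require Import Reals ZArith Lra Lia.
From mathcomp Require Import all_boot zify.
Set Implicit Arguments. Unset Strict Implicit. Unset Printing Implicit Defensive.
Local Open Scope R_scope.

HB.instance Definition _ := Monoid.isComLaw.Build R 0 Rplus (fun a b c => esym (Rplus_assoc a b c)) Rplus_comm Rplus_0_l.
HB.instance Definition _ := Monoid.isComLaw.Build R 1 Rmult (fun a b c => esym (Rmult_assoc a b c)) Rmult_comm Rmult_1_l.
HB.instance Definition _ := Monoid.isMulLaw.Build R 0 Rmult Rmult_0_l Rmult_0_r.
HB.instance Definition _ := Monoid.isAddLaw.Build R Rmult Rplus Rmult_plus_distr_r Rmult_plus_distr_l.

Lemma iter_Rplus (c : R) j : iter j (Rplus c) 0 = INR j * c.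
Proof. elim: j => [|j IH]; first by rewrite /=; lra. rewrite iterS IH S_INR; lra. Qed.

Lemma Rsum_const (I : finType) (P : pred I) c :
  \big[Rplus/0]_(i | P i) c = INR #|[set i | P i]| * c.
Proof.
rewrite -iter_Rplus -big_const; apply: eq_bigl => i; by rewrite inE.
Qed.

Lemma Rsum_ind (I : finType) (P Q : pred I) c :
  \big[Rplus/0]_(i | P i) (if Q i then c else 0) = INR #|[set i | P i && Q i]| * c.
Proof.
rewrite -big_mkcondr /= Rsum_const //.
Qed.

Lemma INR_sum (I : finType) (P : pred I) (f : I -> nat) :
  INR (\sum_(i | P i) f i)%N = \big[Rplus/0]_(i | P i) INR (f i).
Proof.
apply: (big_morph INR) => //; by move=> x y; rewrite plus_INR.
Qed.
Section Clos.
Variables (n k m rr : nat).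
Notation T := {ffun 'I_k -> 'I_n}.
Definition hits (S : {set 'I_n}) (v : T) : bool := (rr <= #|[set i | v i \in S]|)%N.
Definition vars (v : T) : {set 'I_n} := [set v i | i : 'I_k].
Definition closed (w : {ffun 'I_m -> T}) S :=
  [forall a, hits S (w a) ==> (vars (w a) \subset S)].
Definition cl (w : {ffun 'I_m -> T}) (S : {set 'I_n}) : {set 'I_n} :=
  \bigcap_(X : {set 'I_n} | (S \subset X) && closed w X) X.

Implicit Types (S X : {set 'I_n}) (v : T) (w : {ffun 'I_m -> T}).

Lemma hits_mono S S' v : S \subset S' -> hits S v -> hits S' v.
Proof.
move=> sub; rewrite /hits => h; apply: (leq_trans h); apply: subset_leq_card.
apply/subsetP => i; rewrite !inE => /(subsetP sub); done.
Qed.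

Lemma cl_sub w S : S \subset cl w S.
Proof. apply/bigcapsP => X /andP[] //. Qed.

Lemma cl_min w S X : S \subset X -> closed w X -> cl w S \subset X.
Proof. move=> h1 h2; apply: bigcap_inf; by rewrite h1 h2. Qed.

Lemma cl_closed w S : closed w (cl w S).
Proof.
apply/forallP => a; apply/implyP => ha; apply/bigcapsP => X /andP[sX cX].
have sub : cl w S \subset X by apply: cl_min.
move/forallP: cX => /(_ a) /implyP; apply; exact: hits_mono ha.
Qed.

Lemma cl_self w S : closed w S -> cl w S = S.
Proof. move=> h; apply/eqP; rewrite eqEsubset cl_min ?cl_sub //. Qed.

Lemma cl_absorb w S a : hits S (w a) -> cl w S = cl w (S :|: vars (w a)).
Proof.
move=> h; apply/eqP; rewrite eqEsubset; apply/andP; split.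
- apply: cl_min; last exact: cl_closed.
  apply: subset_trans (cl_sub _ _); exact: subsetUl.
- apply: cl_min; last exact: cl_closed.
  rewrite subUset cl_sub /=.
  move/forallP: (cl_closed w S) => /(_ a) /implyP; apply.
  apply: hits_mono h; exact: cl_sub.
Qed.

Lemma card_vars_new S v : hits S v -> (#|S :|: vars v| <= #|S| + (k - rr))%N.
Proof.
rewrite /hits => h.
have e : S :|: vars v = S :|: (v @: ~: [set i | v i \in S]).
  apply/setP => x; rewrite !inE; case xS: (x \in S) => //=.
  apply/imsetP/imsetP => [][i _ ex]; exists i => //.
  by rewrite !inE -ex xS.
rewrite e; apply: leq_trans (leq_card_setU _ _) _.
rewrite leq_add2l; apply: leq_trans (leq_imset_card _ _) _.
have := cardsC [set i | v i \in S]; rewrite card_ord => hc.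
lia.
Qed.
End Clos.
Lemma card_fam (aT rT : finType) (F : aT -> pred rT) :
  #|[set w : {ffun aT -> rT} | [forall a, w a \in F a]]| = (\prod_a #|F a|)%N.
Proof.
have -> : #|[set w : {ffun aT -> rT} | [forall a, w a \in F a]]| = #|(family F : simpl_pred {ffun aT -> rT})|.
  apply: eq_card => w; rewrite inE; apply/forallP/familyP => //.
rewrite card_family foldrE big_map big_enum //.
Qed.
Lemma card_bigcup_le (I T : finType) (P : pred I) (F : I -> {set T}) :
  (#|\bigcup_(i | P i) F i| <= \sum_(i | P i) #|F i|)%N.
Proof.
elim/big_rec2: _ => [|i X y _ h]; first by rewrite cards0.
apply: leq_trans (leq_card_setU _ _) _; by rewrite leq_add2l.
Qed.

Definition Rltb (x y : R) : bool := if Rlt_dec x y then true else false.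
Lemma RltbP x y : Rltb x y = true <-> x < y.
Proof. rewrite /Rltb; case: Rlt_dec => //. Qed.

Lemma exp_le x y : x <= y -> exp x <= exp y.
Proof. case/Rle_lt_or_eq_dec => [h|->]; [left; exact: exp_increasing| right; done]. Qed.

Lemma Rprod_le (I : finType) (P : pred I) (f g : I -> R) :
  (forall i, P i -> 0 <= f i <= g i) ->
  0 <= \big[Rmult/1]_(i | P i) f i <= \big[Rmult/1]_(i | P i) g i.
Proof.
move=> h; elim/big_ind2: _ => //; first lra.
move=> x1 x2 y1 y2 [h1 h2] [h3 h4]; split; nra.
Qed.

Lemma Rprod_ge0 (I : finType) (P : pred I) (f : I -> R) :
  (forall i, P i -> 0 <= f i) -> 0 <= \big[Rmult/1]_(i | P i) f i.
Proof.
move=> h; have := @Rprod_le I P f f; case => // i Pi; have := h i Pi; lra.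
Qed.

Lemma Rsum_le (I : finType) (P : pred I) (f g : I -> R) :
  (forall i, P i -> f i <= g i) ->
  \big[Rplus/0]_(i | P i) f i <= \big[Rplus/0]_(i | P i) g i.
Proof. move=> h; elim/big_ind2: _ => //; first lra. move=> *; lra. Qed.

Lemma INR_prod (I : finType) (P : pred I) (f : I -> nat) :
  INR (\prod_(i | P i) f i)%N = \big[Rmult/1]_(i | P i) INR (f i).
Proof.
apply: (big_morph INR) => //; by move=> x y; rewrite mult_INR.
Qed.

Lemma exp_ge1 x : 0 <= x -> 1 <= exp x.
Proof. move=> h; have := exp_ineq1_le x; lra. Qed.

Section Pot.
Variables (n k m rr : nat) (Inj : {set {ffun 'I_k -> 'I_n}}) (lam s H : R).
Hypothesis lam_ge0 : 0 <= lam.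
Hypothesis rr_lt : (rr < k)%N.
Notation T := {ffun 'I_k -> 'I_n}.
Definition hc (X : {set 'I_n}) : nat := #|Inj :&: [set v | hits rr X v]|.
Hypothesis hH : forall X : {set 'I_n}, INR #|X| < s -> INR (hc X) <= H * INR #|Inj|.
Definition cc := INR (k - rr).
Definition Xs (V : 'I_m -> option T) (St : 'I_m -> {set 'I_n}) a : {set T} :=
  if V a is Some v then [set v] else Inj :\: [set v | hits rr (St a) v].
Definition Bad (S : {set 'I_n}) V St : {set {ffun 'I_m -> T}} :=
  [set w : {ffun 'I_m -> T} | [forall a, w a \in Xs V St a] && ~~ Rltb (INR #|cl rr w S|) s].
Definition Wt (V : 'I_m -> option T) (St : 'I_m -> {set 'I_n}) a : R :=
  if V a is Some _ then 1 else
  INR #|Inj| - INR (hc (St a)) + (H * INR #|Inj| - INR (hc (St a))) * (exp lam - 1).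
Definition Ebound (S : {set 'I_n}) := exp (- lam * ((s - INR #|S|) / cc)).
Definition Meas (S : {set 'I_n}) (V : 'I_m -> option T) (St : 'I_m -> {set 'I_n}) :=
  ((n - #|S|) * (2*m+1) + #|[set a | V a == None]| +
   #|[set a | (V a == None) && (St a != S)]|)%N.
Definition Inv (S : {set 'I_n}) (V : 'I_m -> option T) (St : 'I_m -> {set 'I_n}) :=
  (forall a v, V a = Some v -> vars v \subset S) /\
  (forall a, V a = None -> St a \subset S /\ INR (hc (St a)) <= H * INR #|Inj|).

Lemma hc_le X : (hc X <= #|Inj|)%N.
Proof. apply: subset_leq_card; exact: subsetIl. Qed.

Lemma card_Xs_none X : INR #|Inj :\: [set v | hits rr X v]| = INR #|Inj| - INR (hc X).
Proof.
have := cardsID [set v | hits rr X v] Inj; rewrite /hc => e.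
rewrite -e plus_INR; move: (INR _) (INR _) => x y; ring.
Qed.

Lemma cc_pos : 0 < cc.
Proof. rewrite /cc; apply: lt_0_INR; apply/ltP; rewrite subn_gt0 //. Qed.

Lemma Wt_ge0 S V St a : Inv S V St -> 0 <= Wt V St a.
Proof.
move=> [_ I2]; rewrite /Wt; case e: (V a) => [v|]; first lra.
have [_ h] := I2 a e.
have h1 := exp_ge1 lam_ge0.
have h2 : INR (hc (St a)) <= INR #|Inj| by apply: le_INR; apply/leP; exact: hc_le.
nra.
Qed.

Lemma Xs_le_Wt S V St a : Inv S V St -> INR #|Xs V St a| <= Wt V St a.
Proof.
move=> [_ I2]; rewrite /Wt /Xs; case e: (V a) => [v|]; first by rewrite cards1 /=; lra.
have [_ h] := I2 a e.
have h1 := exp_ge1 lam_ge0.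
rewrite card_Xs_none; nra.
Qed.


Lemma pot N : forall S V St, Meas S V St = N -> Inv S V St ->
  INR #|Bad S V St| <= Ebound S * \big[Rmult/1]_(a < m) Wt V St a.
Proof.
elim/ltn_ind: N => N IH S V St eM hI.
have Wge0 : 0 <= \big[Rmult/1]_(a < m) Wt V St a.
  by apply: Rprod_ge0 => a _; exact: Wt_ge0 hI.
have Egt0 : 0 < Ebound S by apply: exp_pos.
have hcc := cc_pos.
case: (Rlt_dec (INR #|S|) s) => hS; last first.
  have ht : (s - INR #|S|) / cc <= 0.
    have hinv := Rinv_0_lt_compat _ hcc; rewrite /Rdiv; nra.
  have hE : 1 <= Ebound S by apply: exp_ge1; nra.
  have h1 : (#|Bad S V St| <= #|[set w : {ffun 'I_m -> T} | [forall a, w a \in Xs V St a]]|)%N.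
    by apply: subset_leq_card; apply/subsetP => w; rewrite !inE => /andP[].
  apply: Rle_trans (le_INR _ _ (leP h1)) _.
  rewrite card_fam INR_prod.
  have [h2 h3] := @Rprod_le _ (fun _ => true) (fun a => INR #|Xs V St a|) (Wt V St)
    (fun a _ => conj (pos_INR _) (Xs_le_Wt a hI)).
  move: h2 h3 Wge0 hE; set P := \big[Rmult/1]_(a < m) Wt V St a.
  set Q := \big[Rmult/1]_(a < m) _; clearbody P Q; move: (Ebound S) => E.
  move=> *; nra.
have [I1 I2] := hI.
case: (pickP (fun a => (V a == None) && (St a != S))) => [a /andP[/eqP Va StaS] | hnone]; last first.
  have -> : #|Bad S V St| = 0%N.
    apply: eq_card0 => w; rewrite inE; apply/negbTE; apply/negP => /andP[/forallP hw].
    have cS : closed rr w S.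
      apply/forallP => b; apply/implyP => hb; move: (hw b); rewrite /Xs.
      case e: (V b) => [v|]; first by rewrite inE => /eqP ->; exact: I1 e.
      rewrite !inE => /andP[hh _]; exfalso.
      have := hnone b; rewrite /= e eqxx /= => /negbFE /eqP St_b.
      by move: hh; rewrite St_b hb.
    rewrite cl_self //; have := proj2 (RltbP (INR #|S|) s) hS; by move=> ->.
  rewrite /=; apply: Rmult_le_pos => //; lra.
have [Sta_sub hca] := I2 a Va.
pose St0 := fun b => if b == a then S else St b.
pose V1 := fun (v : T) b => if b == a then Some v else V b.
pose Hv := (Inj :&: [set v | hits rr S v]) :\: [set v | hits rr (St a) v].
have incl : Bad S V St \subset
   Bad S V St0 :|: \bigcup_(v in Hv) Bad (S :|: vars v) (V1 v) St.
  apply/subsetP => w; rewrite inE => /andP[/forallP hw hbad].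
  have := hw a; rewrite /Xs Va !inE => /andP[nha inja].
  case hwa: (hits rr S (w a)).
  - apply/orP; right; apply/bigcupP; exists (w a).
      by rewrite !inE nha inja hwa.
    rewrite inE -cl_absorb // hbad andbT; apply/forallP => b.
    rewrite /Xs /V1; case: eqP => [->|nb]; first by rewrite inE.
    by move: (hw b); rewrite /Xs.
  - apply/orP; left; rewrite hbad andbT; apply/forallP => b.
    rewrite /Xs /St0; case: eqP => [->|nb]; last by move: (hw b); rewrite /Xs.
    by rewrite Va !inE inja hwa.
have hcard : (#|Bad S V St| <= #|Bad S V St0| +
    \sum_(v in Hv) #|Bad (S :|: vars v) (V1 v) St|)%N.
  apply: leq_trans (subset_leq_card incl) _; apply: leq_trans (leq_card_setU _ _) _.
  rewrite leq_add2l; exact: card_bigcup_le.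
have inv0 : Inv S V St0.
  split => // b; rewrite /St0; case: eqP => [-> _|_]; last exact: I2.
  split; [exact: subxx | exact: hH].
have inv1 : forall v, v \in Hv -> Inv (S :|: vars v) (V1 v) St.
  move=> v hv; split.
  - move=> b v'; rewrite /V1; case: eqP => [_ [<-]|_ e]; first exact: subsetUr.
    apply: subset_trans (subsetUl _ _); exact: I1 e.
  - move=> b; rewrite /V1; case: eqP => // _ e; have [h1 h2] := I2 b e; split => //.
    apply: subset_trans h1 (subsetUl _ _).
have m0 : (Meas S V St0 < N)%N.
  rewrite -eM /Meas ltn_add2l; apply: proper_card; apply/properP; split.
    apply/subsetP => b; rewrite !inE /St0; case: (b =P a) => [->|//]; by move=> /andP[_]; rewrite eqxx.
  exists a; first by rewrite !inE Va eqxx StaS.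
  by rewrite !inE /St0 eqxx; apply/negP => /andP[_]; rewrite eqxx.
have m1 : forall v, v \in Hv -> (Meas (S :|: vars v) (V1 v) St < N)%N.
  move=> v hv; rewrite -eM /Meas.
  have cN : (#|[set b | V1 v b == None]| < #|[set b | V b == None]|)%N.
    apply: proper_card; apply/properP; split.
      apply/subsetP => b; rewrite !inE /V1; case: (b =P a) => //.
    exists a; first by rewrite !inE Va.
    by rewrite !inE /V1 eqxx.
  have c2 : (#|[set b | (V1 v b == None) && (St b != S :|: vars v)]| <= m)%N.
    by rewrite -[X in (_ <= X)%N]card_ord max_card.
  have c3 : (#|[set b | (V b == None) && (St b != S)]| <= m)%N.
    by rewrite -[X in (_ <= X)%N]card_ord max_card.
  case: (S :|: vars v =P S) => eS.
  - rewrite eS.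
    have : (#|[set b | (V1 v b == None) && (St b != S)]| <=
            #|[set b | (V b == None) && (St b != S)]|)%N.
      apply: subset_leq_card; apply/subsetP => b; rewrite !inE /V1.
      by case: (b =P a).
    lia.
  - have lt1 : (#|S| < #|S :|: vars v|)%N.
      apply: proper_card; rewrite properEneq subsetUl andbT; apply/eqP => h; apply: eS; rewrite -h // setUid.
    have lt2 : (#|S :|: vars v| <= n)%N.
      by rewrite -[X in (_ <= X)%N]card_ord max_card.
    have c4 : (#|[set b | V1 v b == None]| <= m)%N.
      by rewrite -[X in (_ <= X)%N]card_ord max_card.
    nia.
have h0 := IH _ m0 S V St0 erefl inv0.
have h1 := fun v hv => IH _ (m1 v hv) _ _ _ erefl (inv1 v hv).
pose P' := \big[Rmult/1]_(b < m | b != a) Wt V St b.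
have P'ge0 : 0 <= P' by apply: Rprod_ge0 => b _; exact: Wt_ge0 hI.
have eP : \big[Rmult/1]_(b < m) Wt V St b = Wt V St a * P' by rewrite (bigD1 a).
have eP0 : \big[Rmult/1]_(b < m) Wt V St0 b = Wt V St0 a * P'.
  rewrite (bigD1 a) //; congr (_ * _); apply: eq_bigr => b nb; rewrite /Wt /St0 (negbTE nb) //.
have eP1 : forall v, \big[Rmult/1]_(b < m) Wt (V1 v) St b = P'.
  move=> v; rewrite (bigD1 a) // {1}/Wt /V1 eqxx /= Rmult_1_l; apply: eq_bigr => b nb.
  by rewrite /Wt /V1 (negbTE nb).
have hEv : forall v, v \in Hv -> Ebound (S :|: vars v) <= Ebound S * exp lam.
  move=> v; rewrite !inE => /andP[_ /andP[_ hv]].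
  have := card_vars_new hv => /leP hle; have := le_INR _ _ hle; rewrite plus_INR -/cc.
  rewrite /Ebound -exp_plus => hle'; apply: exp_le.
  have hinv := Rinv_0_lt_compat _ hcc.
  have hi : cc * / cc = 1 by field; lra.
  move: hle'; rewrite /Rdiv; move: (INR #|S :|: vars v|) (INR #|S|) => x y hxy.
  have t : (x - y) * / cc <= 1 by nra.
  nra.
have eHv : INR #|Hv| = INR (hc S) - INR (hc (St a)).
  have := cardsID [set v | hits rr (St a) v] (Inj :&: [set v | hits rr S v]).
  have e2 : (Inj :&: [set v | hits rr S v]) :&: [set v | hits rr (St a) v] =
            Inj :&: [set v | hits rr (St a) v].
    apply/setP => v; rewrite !inE; case h: (hits rr (St a) v); rewrite ?andbF ?andbT //.
    by rewrite (hits_mono Sta_sub h) andbT.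
  rewrite e2 /hc => e; rewrite -e plus_INR /Hv; move: (INR _) (INR _) => x y; ring.
have hsum : \big[Rplus/0]_(v in Hv) INR #|Bad (S :|: vars v) (V1 v) St| <=
            INR #|Hv| * (Ebound S * exp lam * P').
  have -> : INR #|Hv| = INR #|[set v | v \in Hv]| by congr INR; apply: eq_card => v; rewrite inE.
  rewrite -Rsum_const; apply: Rsum_le => v hv.
  have := h1 v hv; rewrite eP1 => hb; apply: Rle_trans hb _.
  apply: Rmult_le_compat_r => //; exact: hEv.
have key : Wt V St0 a + INR #|Hv| * exp lam = Wt V St a.
  rewrite /Wt Va /St0 eqxx eHv.
  move: (INR (hc S)) (INR (hc (St a))) (INR #|Inj|) (exp lam) => x y z e; ring.
have := le_INR _ _ (leP hcard); rewrite plus_INR INR_sum => hc1.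
rewrite eP; move: hc1 h0 hsum key P'ge0 Egt0 (exp_ge1 lam_ge0); rewrite eP0.
set B0 := INR #|Bad S V St0|; set Sm := \big[Rplus/0]_(v in Hv) _.
clearbody P' B0 Sm; move: (INR #|Bad S V St|) (INR #|Hv|) (Ebound S) (exp lam) (Wt V St0 a) (Wt V St a) => x y E e w0 w1.
move=> *; nra.
Qed.

Lemma iter_Rmult (c : R) j : iter j (Rmult c) 1 = c ^ j.
Proof. elim: j => [|j IH] //=; by rewrite IH. Qed.

Lemma pot0 (U : {set 'I_n}) : (0 < rr)%N -> 0 <= H ->
  INR #|[set w : {ffun 'I_m -> T} | [forall a, w a \in Inj] && ~~ Rltb (INR #|cl rr w U|) s]|
  <= exp (- lam * ((s - INR #|U|) / cc)) * (INR #|Inj| * (1 + H * (exp lam - 1))) ^ m.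
Proof.
move=> rr0 H0.
have hit0 : forall v : T, hits rr set0 v = false.
  move=> v; have e : [set i | v i \in (set0 : {set 'I_n})] = set0 by apply/setP => i; rewrite !inE.
  by rewrite /hits e cards0 leqNgt rr0.
have hc0 : hc set0 = 0%N.
  apply: eq_card0 => v; by rewrite !inE hit0 andbF.
have hI : Inv U (fun _ => None) (fun _ => set0).
  split => // a _; split; first exact: sub0set.
  rewrite hc0; apply: Rle_trans (Rmult_le_pos _ _ H0 (pos_INR _)); right; reflexivity.
have := pot erefl hI.
have -> : Bad U (fun _ => None) (fun _ => set0) =
  [set w : {ffun 'I_m -> T} | [forall a, w a \in Inj] && ~~ Rltb (INR #|cl rr w U|) s].
  apply/setP => w; rewrite !inE /Xs; congr (_ && _); apply: eq_forallb => a.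
  by rewrite !inE (hit0 (w a)).
rewrite /Ebound big_const_ord iter_Rmult /Wt hc0 /=.
have -> : INR #|Inj| - 0 + (H * INR #|Inj| - 0) * (exp lam - 1) = INR #|Inj| * (1 + H * (exp lam - 1)).
  move: (INR #|Inj|) => x; ring.
done.
Qed.

End Pot.

Lemma ex_sub (T : finType) (A : {set T}) j : (j <= #|A|)%N -> exists R : {set T}, (R \subset A) && (#|R| == j).
Proof.
move=> h; exists [set x in take j (enum A)]; apply/andP; split.
  by apply/subsetP => x; rewrite inE => /mem_take; rewrite mem_enum.
rewrite cardsE (card_uniqP _) ?take_uniq ?enum_uniq // size_take -cardE.
by case: ltnP => // h2; rewrite eqn_leq h2 h.
Qed.

Lemma card_hits_le (n k rr : nat) (X : {set 'I_n}) : (rr <= k)%N ->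
  (#|[set v : {ffun 'I_k -> 'I_n} | hits rr X v]| <= 'C(k, rr) * #|X| ^ rr * n ^ (k - rr))%N.
Proof.
move=> rrk.
pose Fam (R : {set 'I_k}) := [set v : {ffun 'I_k -> 'I_n} |
   [forall i, v i \in (if i \in R then [pred x | x \in X] else predT)]].
have sub : [set v : {ffun 'I_k -> 'I_n} | hits rr X v] \subset
    \bigcup_(R | R \in [set R : {set 'I_k} | #|R| == rr]) Fam R.
  apply/subsetP => v; rewrite inE /hits => h.
  have [R /andP[RA /eqP cR]] := ex_sub h.
  apply/bigcupP; exists R; first by rewrite inE cR.
  rewrite inE; apply/forallP => i; case iR: (i \in R) => //.
  by move/subsetP: RA => /(_ i iR); rewrite !inE.
apply: leq_trans (subset_leq_card sub) _.
apply: leq_trans (card_bigcup_le _ _) _.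
have cF : forall R : {set 'I_k}, R \in [set R : {set 'I_k} | #|R| == rr] ->
    #|Fam R| = (#|X| ^ rr * n ^ (k - rr))%N.
  move=> R; rewrite inE => /eqP cR.
  rewrite /Fam card_fam (bigID (fun i => i \in R)) /=.
  rewrite (eq_bigr (fun _ => #|X|)); last first.
    by move=> i ->; apply: eq_card => x; rewrite inE.
  rewrite [X in (_ * X)%N](eq_bigr (fun _ => n)); last first.
    by move=> i hi; rewrite (negbTE hi) cardT size_enum_ord.
  rewrite !prod_nat_const cR (@eq_card _ _ (~: R)); last by move=> i; rewrite inE.
  have := cardsC R; rewrite card_ord cR => e.
  congr (_ * _ ^ _)%N; lia.
rewrite (eq_bigr _ cF) sum_nat_const card_draws card_ord.
by rewrite mulnA.
Qed.

Section LP.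
Variables (q n k l m r u : nat) (F : nat -> {ffun 'I_k -> 'I_q} -> {ffun 'I_l -> 'I_q})
  (tup : {ffun 'I_m -> {ffun 'I_k -> 'I_n}}) (xs : {ffun 'I_n -> 'I_q}) (S : {set 'I_n}).
Hypothesis q2 : (2 <= q)%N.
Hypothesis wi : forall a : nat, wise_indep (r - 1) (F a).
Hypothesis clS : closed (r - 1) tup S.
Hypothesis uS : forall i : 'I_n, (i < u)%N -> i \in S.

Definition Tset (a : 'I_m) := [set s : 'I_k | tup a s \in S].
Definition rx (a : 'I_m) := restrict xs (tup a).
Definition ya (a : 'I_m) := F a (rx a).
Definition fullc (a : 'I_m) := [forall s, tup a s \in S].
Definition agree (a : 'I_m) (x : {ffun 'I_k -> 'I_q}) := [forall i in Tset a, x i == rx a i].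
Definition Nset (a : 'I_m) := [set x : {ffun 'I_k -> 'I_q} | agree a x && (F a x == ya a)].
Definition bv (i : 'I_n) (x : 'I_q) : R := if i \in S then (if x == xs i then 1 else 0) else / INR q.
Definition bc (a : 'I_m) (x : {ffun 'I_k -> 'I_q}) : R :=
  if fullc a then (if x == rx a then 1 else 0)
  else (if agree a x && (F a x == ya a) then / INR #|Nset a| else 0).

Lemma q_pos : 0 < INR q.
Proof. apply: lt_0_INR; apply/ltP; exact: leq_trans q2. Qed.

Lemma notfull_small a : ~~ fullc a -> (#|Tset a| < r - 1)%N.
Proof.
move=> nf; rewrite ltnNge; apply/negP => h.
move/forallP: clS => /(_ a) /implyP /(_ h) sub.
move/negP: nf; apply; apply/forallP => s; apply: (subsetP sub); apply/imsetP; by exists s.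
Qed.

Lemma Nset_card a : ~~ fullc a ->
  (#|Nset a| * q ^ #|Tset a| * q ^ l = q ^ k)%N.
Proof.
move=> nf; have := wi (nat_of_ord a) (ltnW (notfull_small nf)) (rx a) (ya a).
by rewrite /Nset /agree.
Qed.

Lemma Nset_pos a : ~~ fullc a -> (0 < #|Nset a|)%N.
Proof.
move=> nf; have := Nset_card nf; case: (#|Nset a|) => // /esym.
rewrite !mul0n => /eqP; rewrite expn_eq0 => /andP[/eqP q0 _]; move: q2; rewrite q0.
done.
Qed.

Lemma bv_sum i : Rsum predT (bv i) = 1.
Proof.
rewrite /Rsum /bv; case: (i \in S).
  rewrite (bigD1 (xs i)) //= eqxx big1 => [|x]; [lra| by case: eqP].
rewrite Rsum_const (@eq_card _ _ predT) ?cardT ?size_enum_ord; last by move=> x; rewrite inE.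
have := q_pos; move=> h; field; lra.
Qed.

Lemma bc_sum a : Rsum predT (bc a) = 1.
Proof.
rewrite /Rsum /bc; case hf: (fullc a).
  rewrite (bigD1 (rx a)) //= eqxx big1 => [|x]; [lra| by case: eqP].
rewrite Rsum_ind (@eq_card _ _ (Nset a)); last by move=> x; rewrite !inE.
have : (0 < #|Nset a|)%N by apply: Nset_pos; rewrite hf.
move=> /ltP /lt_0_INR h; field; lra.
Qed.

Lemma rxE a s : rx a s = xs (tup a s).
Proof. by rewrite /rx /restrict ffunE. Qed.

Lemma agree_at a x s : agree a x -> tup a s \in S -> x s = rx a s.
Proof. by move=> /forallP /(_ s) /implyP h hs; apply/eqP; apply: h; rewrite inE. Qed.

Lemma bc_marg a s z : Rsum (fun x : {ffun 'I_k -> 'I_q} => x s == z) (bc a) = bv (tup a s) z.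
Proof.
rewrite /Rsum /bc /bv; case hf: (fullc a).
  have hS : tup a s \in S by move/forallP: hf.
  rewrite hS Rsum_ind Rmult_1_r.
  case: (z =P xs (tup a s)) => [ez|nz].
    rewrite (@eq_card _ _ (pred1 (rx a))) ?card1 //.
    move=> x; rewrite !inE; apply/andP/eqP => [[_ /eqP]|->] //.
    by split => //; rewrite rxE ez.
  rewrite (@eq_card0 _ [set x : {ffun 'I_k -> 'I_q} | (x s == z) && (x == rx a)]) //.
  move=> x; rewrite !inE; apply/negP => /andP[/eqP e1 /eqP e2]; apply: nz.
  by rewrite -e1 e2 rxE.
have Npos : (0 < #|Nset a|)%N by apply: Nset_pos; rewrite hf.
have NposR : 0 < INR #|Nset a| by apply: lt_0_INR; apply/ltP.
rewrite Rsum_ind; case sT: (tup a s \in S).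
  case: (z =P xs (tup a s)) => [ez|nz].
    rewrite (@eq_card _ _ (Nset a)); first by field; lra.
    move=> x; rewrite !inE; case ag: (agree a x); rewrite ?andbF //=.
    by rewrite (agree_at ag sT) rxE ez eqxx.
  rewrite (@eq_card0 _ [set x : {ffun 'I_k -> 'I_q} | (x s == z) && (agree a x && (F a x == ya a))]) /=; first lra.
  move=> x; rewrite !inE; apply/negP => /andP[/eqP e1 /andP[ag _]]; apply: nz.
  by rewrite -e1 (agree_at ag sT) rxE.
pose z' := [ffun i => if i == s then z else rx a i].
have sTs : s \notin Tset a by rewrite inE sT.
have hT : (#|s |: Tset a| <= r - 1)%N.
  by rewrite cardsU1 sTs add1n; apply: notfull_small; rewrite hf.
have hM := wi (nat_of_ord a) hT z' (ya a).
have hN := Nset_card (negbT hf).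
set M := [set x : {ffun 'I_k -> 'I_q} | [forall i in s |: Tset a, x i == z' i] && (F a x == ya a)] in hM.
have eM : [set x : {ffun 'I_k -> 'I_q} | (x s == z) && (agree a x && (F a x == ya a))] = M.
  apply/setP => x; rewrite !inE andbA; congr (_ && _).
  apply/andP/forallP => [[h1 /forallP h2] i|h].
    rewrite !inE ffunE; apply/implyP; case: (i =P s) => [->|ne] //= iT.
    by move/implyP: (h2 i); apply; rewrite inE.
  split.
    by have := h s; rewrite !inE eqxx /= ffunE eqxx.
  apply/forallP => i; apply/implyP => iT; have := h i; move: (iT); rewrite !inE => iT2; rewrite iT2 orbT /= ffunE.
  case: (i =P s) => [e|//]; by move: iT; rewrite e (negbTE sTs).
rewrite eM.
have eNM : (#|Nset a| = #|M| * q)%N.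
  rewrite cardsU1 sTs add1n expnS in hM.
  have qpos : (0 < q ^ #|Tset a| * q ^ l)%N by rewrite muln_gt0 !expn_gt0 (leq_trans _ q2).
  apply/eqP; rewrite -(eqn_pmul2r qpos) !mulnA; apply/eqP; rewrite hN -hM.
  by rewrite !mulnA.
have qR := q_pos.
rewrite eNM mult_INR; move: NposR; rewrite eNM mult_INR => h.
have Mpos : 0 < INR #|M|.
  have := pos_INR #|M|; case/Rle_lt_or_eq_dec => // e; rewrite -e in h; lra.
field; lra.
Qed.

Lemma lp_ok bound : INR #|S| < bound -> lp_small_zero_opt u F tup xs bound.
Proof.
move=> hb; have qR := q_pos.
exists bv, bc; split; [|split].
- split; [|split; [|split; [|split; [|split]]]].
  + move=> i x; rewrite /bv; case: (i \in S); first by case: (x == xs i); lra.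
    by left; apply: Rinv_0_lt_compat.
  + exact: bv_sum.
  + move=> a x; rewrite /bc; case hf: (fullc a); first by case: (x == rx a); lra.
    case: (_ && _); last lra.
    have : (0 < #|Nset a|)%N by apply: Nset_pos; rewrite hf.
    by move=> /ltP /lt_0_INR h; left; apply: Rinv_0_lt_compat.
  + exact: bc_sum.
  + move=> a s z; exact: bc_marg.
  + by move=> i hi; rewrite /bv uS // eqxx.
- rewrite /lp_objective /Rsum big1 // => a _; rewrite big1 // => x _.
  rewrite /bc; case: (fullc a).
    case: (x =P rx a) => [->|_]; last lra.
    by rewrite /rx eqxx /=; lra.
  case h: (_ && _); last lra.
  by move: h => /andP[_ /eqP ->]; rewrite /ya /rx eqxx /=; lra.
- exists S; split => // i; split.
    move=> [x]; rewrite /bv; case: (i \in S) => // h; exfalso.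
    have : INR 2 <= INR q by apply: le_INR; apply/leP.
    rewrite /= => h2.
    have : / INR q * INR q = 1 by field; lra.
    rewrite h; lra.
  by move=> hi; exists (xs i); rewrite /bv hi eqxx.
Qed.

End LP.

Lemma exp_pow x j : exp x ^ j = exp (INR j * x).
Proof.
elim: j => [|j IH]; first by rewrite /= Rmult_0_l exp_0.
rewrite /pow -/pow IH S_INR -exp_plus; congr exp; ring.
Qed.

Lemma bernoulli t j : 0 <= t <= 1 -> 1 - INR j * t <= (1 - t) ^ j.
Proof.
move=> ht; elim: j => [|j IH]; first by rewrite /=; lra.
rewrite /pow -/pow S_INR.
have h1 : (1 - t) * (1 - INR j * t) <= (1 - t) * (1 - t) ^ j by apply: Rmult_le_compat_l; lra.
have := pos_INR j; nra.
Qed.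

Lemma ffact_ge n j : ((n - j) ^ j <= n ^_ j)%N.
Proof.
elim: j n => [|j IH] n; first by rewrite expn0 ffactn0.
rewrite ffactnS expnS; apply: leq_mul; first exact: leq_subr.
apply: leq_trans (IH n.-1); have -> : (n - j.+1 = n.-1 - j)%N by lia.
done.
Qed.

Lemma INR_expn a j : INR (a ^ j)%N = INR a ^ j.
Proof. elim: j => [|j IH]; first by rewrite expn0. by rewrite expnS mult_INR IH. Qed.

Lemma ffact_asym k th : 1 < th -> exists N, forall n, (N <= n)%N ->
  (k < n)%N /\ INR n ^ k <= th * INR (n ^_ k).
Proof.
move=> hth.
have [N0 hN0] := INR_archimed (th - 1) (INR k * INR k * th) ltac:(lra).
exists (maxn N0 k.+1) => n; rewrite geq_max => /andP[h1 h2]; split => //.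
have nR : INR N0 <= INR n by apply: le_INR; apply/leP.
have kn : INR k < INR n by apply: lt_INR; apply/ltP.
have k0 := pos_INR k.
have npos : 0 < INR n by lra.
pose z := / INR n.
have hz : INR n * z = 1 by rewrite /z; field; lra.
have zpos : 0 < z by apply: Rinv_0_lt_compat.
have big : INR k * INR k * th * z < th - 1.
  have : INR k * INR k * th < INR n * (th - 1) by nra.
  move=> h; have := Rmult_lt_compat_r z _ _ zpos h; nra.
have tb : 0 <= INR k * z <= 1.
  split; first nra.
  have : INR k * z < INR n * z by apply: Rmult_lt_compat_r.
  lra.
have hb := bernoulli k tb.
have e : INR n ^ k * (1 - INR k * z) ^ k = INR ((n - k) ^ k).
  rewrite INR_expn minus_INR; last by apply/leP; exact: ltnW.
  rewrite -Rpow_mult_distr; congr (_ ^ _); rewrite /z; field; lra.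
have hf : INR ((n - k) ^ k) <= INR (n ^_ k) by apply: le_INR; apply/leP; exact: ffact_ge.
have pk : 0 <= INR n ^ k by apply: pow_le; lra.
have key : 1 <= th * (1 - INR k * (INR k * z)) by nra.
have : INR n ^ k * (1 - INR k * (INR k * z)) <= INR (n ^_ k).
  apply: Rle_trans hf; rewrite -e; apply: Rmult_le_compat_l => //.
nra.
Qed.

Lemma floor_le x : 0 <= x -> INR (Z.to_nat (Int_part x)) <= x.
Proof.
move=> hx; have [h1 h2] := base_Int_part x.
case: (Z.le_gt_cases 0 (Int_part x)) => h.
  by rewrite INR_IZR_INZ Z2Nat.id.
move: h; case: (Int_part x) => //= p _; lra.
Qed.

Lemma card_U_le n j : (#|[set i : 'I_n | (i < j)%N]| <= j)%N.
Proof.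
rewrite cardE -(size_map val) -[X in (_ <= X)%N](size_iota 0 j).
apply: uniq_leq_size; first by rewrite map_inj_uniq ?enum_uniq //; exact: val_inj.
move=> x /mapP [i]; rewrite mem_enum inE => hi ->; by rewrite mem_iota.
Qed.

Lemma card_prod_fst (A B : finType) (P : pred A) :
  #|[set w : A * B | P w.1]| = (#|[set x | P x]| * #|B|)%N.
Proof.
have -> : [set w : A * B | P w.1] = setX [set x | P x] setT.
  by apply/setP => [[x y]]; rewrite !inE andbT.
by rewrite cardsX cardsT.
Qed.

Lemma alpha_lt_beta p k mu : (p.+2 <= k)%N -> (0 < p)%N -> 0 < mu -> mu < mu_c k p.+2 ->
  mu * INR 'C(k, p.+1) * (1 + / INR p) ^ p.+1 < / INR p / INR (k - p.+1).
Proof.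
move=> hk hp hmu; rewrite /mu_c.
have -> : (p.+2 - 2 = p)%N by lia.
have -> : (p.+2 - 1 = p.+1)%N by lia.
have eb := mul_bin_left k p.+1.
have ebR : INR p.+2 * INR 'C(k, p.+2) = INR (k - p.+1) * INR 'C(k, p.+1).
  by rewrite -!mult_INR; congr INR; exact: eb.
have Ck : 0 < INR 'C(k, p.+2) by apply: lt_0_INR; apply/ltP; rewrite bin_gt0.
have a0 : 0 < INR p by apply: lt_0_INR; apply/ltP.
have cc0 : 0 < INR (k - p.+1) by apply: lt_0_INR; apply/ltP; lia.
have r0 : 0 < INR p.+2 by apply: lt_0_INR; apply/ltP.
rewrite (S_INR p.+1) in r0 ebR *. rewrite (S_INR p) in r0 ebR *.
move: (INR 'C(k, p.+2)) (INR 'C(k, p.+1)) (INR (k - p.+1)) (INR p) Ck cc0 a0 r0 ebR => C2 C1 cc a hC2 hcc ha _ e.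
have Ap : 0 < a ^ p by apply: pow_lt.
have A1 : 0 < (a + 1) ^ p.+1 by apply: pow_lt; lra.
have e1 : (1 + / a) ^ p.+1 = (a + 1) ^ p.+1 / (a * a ^ p).
  rewrite (_ : 1 + / a = (a + 1) * / a); last by field; lra.
  rewrite Rpow_mult_distr pow_inv /= /Rdiv; done.
rewrite e1 => h.
have h2 : mu * (a + 1 + 1) * C2 < a ^ p / (a + 1) ^ p.+1.
  have : mu * (a + 1 + 1) * C2 < / C2 * (a ^ p / ((a + 1 + 1) * (a + 1) ^ p.+1)) * (a + 1 + 1) * C2.
    apply: Rmult_lt_compat_r => //; apply: Rmult_lt_compat_r => //; lra.
  move=> hh; apply: (Rlt_le_trans _ _ _ hh); right; field; lra.
have h3 : mu * C1 * cc < a ^ p / (a + 1) ^ p.+1.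
  have -> : mu * C1 * cc = mu * ((a + 1 + 1) * C2) by rewrite e; ring.
  lra.
have K0 : 0 < (a + 1) ^ p.+1 / (a * a ^ p).
  apply: Rdiv_lt_0_compat => //; nra.
have h4 := Rmult_lt_compat_r _ _ _ K0 h3.
have e4 : a ^ p / (a + 1) ^ p.+1 * ((a + 1) ^ p.+1 / (a * a ^ p)) = / a.
  field; repeat split; lra.
rewrite e4 in h4.
move: K0 h4; move: ((a + 1) ^ p.+1 / (a * a ^ p)) => K K0 h4.
have ic := Rinv_0_lt_compat _ hcc.
have -> : mu * C1 * K = (mu * C1 * cc * K) * / cc by field; lra.
rewrite /Rdiv; apply: Rmult_lt_compat_r => //.
Qed.

Theorem theorem1 (q k l r : nat) (u : nat -> nat)
  (F : nat -> nat -> {ffun 'I_k -> 'I_q} -> {ffun 'I_l -> 'I_q}) (mu : R) :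
  (2 <= q)%N -> (3 <= k)%N -> (1 <= l)%N -> (l <= k - 1)%N ->
  (3 <= r)%N -> (r <= k)%N ->
  (forall M : nat, exists N : nat, forall n : nat, (N <= n)%N -> (M <= u n)%N) ->
  (forall eps : R, (0 < eps)%R -> exists N : nat, forall n : nat, (N <= n)%N ->
      (INR (u n) / INR n < eps)%R) ->
  (forall n a : nat, surj_loc (F n a) /\ wise_indep (r - 1) (F n a)) ->
  (0 < mu)%R -> (mu < mu_c k r)%R ->
  exists c : R, (0 < c)%R /\
  exists N : nat, forall n : nat, (N <= n)%N ->
    exists G : {set {ffun 'I_(m_of mu r u n) -> {ffun 'I_k -> 'I_n}}
                    * {ffun 'I_n -> 'I_q}},
      G \subset sample_space q n k (m_of mu r u n) /\
      ((1 - exp (- c * INR (u n))) * INR #|sample_space q n k (m_of mu r u n)|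
         <= INR #|G|)%R /\
      (forall w, w \in G ->
         lp_small_zero_opt (u n) (F n) w.1 w.2
           ((1 + / INR (r - 2)) * INR (u n))%R).
Proof.
move=> hq hk hl1 hl2 hr3 hrk hu _ hF hmu hmuc.
have [p ep] : exists p, (r = p.+2)%N by exists (r - 2)%N; lia.
subst r.
have p0 : (0 < p)%N by lia.
have e1 : (p.+2 - 1 = p.+1)%N by lia.
have e2 : (p.+2 - 2 = p)%N by lia.
rewrite e2.
have hab := alpha_lt_beta hrk p0 hmu hmuc.
set a := INR p.
set cc := INR (k - p.+1).
set C1 := INR 'C(k, p.+1).
set alpha := mu * C1 * (1 + / a) ^ p.+1.
set beta := / a / cc.
have hab' : alpha < beta by exact: hab.
clear hab.
have a0 : 0 < a by apply: lt_0_INR; apply/ltP.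
have cc0 : 0 < cc by apply: lt_0_INR; apply/ltP; lia.
have C10 : 0 < C1 by apply: lt_0_INR; apply/ltP; rewrite bin_gt0; lia.
have alpha0 : 0 < alpha.
  apply: Rmult_lt_0_compat; first by apply: Rmult_lt_0_compat.
  apply: pow_lt; have := Rinv_0_lt_compat _ a0; lra.
have beta0 : 0 < beta by apply: Rdiv_lt_0_compat => //; apply: Rinv_0_lt_compat.
set alpha' := (alpha + beta) / 2.
set y := beta / alpha'.
have alpha'0 : 0 < alpha' by rewrite /alpha'; lra.
have y1 : 1 < y.
  rewrite /y /Rdiv; apply: (Rmult_lt_reg_r alpha') => //; rewrite Rmult_assoc Rinv_l; [|lra]; rewrite /alpha'; lra.
set lam := ln y.
have ey : exp lam = y by apply: exp_ln; lra.
have lam0 : 0 < lam.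
  case: (Rlt_le_dec 0 lam) => // h; exfalso.
  have : exp lam <= exp 0 by apply: exp_le.
  rewrite ey exp_0; lra.
set g := beta * lam - (beta - alpha').
have g0 : 0 < g.
  have h1 := exp_ineq1 (- lam) ltac:(lra).
  rewrite exp_Ropp ey in h1.
  have : / y = alpha' / beta by rewrite /y; field; lra.
  move=> e; rewrite e in h1.
  have : beta * (1 - lam) < alpha' .
    have := Rmult_lt_compat_l beta _ _ beta0 h1; move=> hh.
    have : beta * (alpha' / beta) = alpha' by field; lra.
    lra.
  rewrite /g; lra.
exists g; split => //.
set th := alpha' / alpha.
have th1 : 1 < th.
  rewrite /th /Rdiv; apply: (Rmult_lt_reg_r alpha) => //; rewrite Rmult_assoc Rinv_l; [|lra]; rewrite /alpha'; lra.
have [N1 hN1] := ffact_asym k th1.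
have [N2 hN2] := hu 1%N.
exists (maxn N1 N2) => n; rewrite geq_max => /andP[hn1 hn2].
have [kn hth] := hN1 n hn1.
have un1 : (1 <= u n)%N := hN2 n hn2.
set m := m_of mu p.+2 u n.
set un := u n.
have un0 : 0 < INR un by apply: lt_0_INR; apply/ltP.
set s := (1 + / a) * INR un.
pose U := [set i : 'I_n | (i < un)%N].
pose Inj := [set v : {ffun 'I_k -> 'I_n} | injectiveb v].
have eI : #|Inj| = (n ^_ k)%N by rewrite card_inj_ffuns !card_ord.
have I0 : 0 < INR #|Inj|.
  by rewrite eI; apply: lt_0_INR; apply/ltP; rewrite ffact_gt0 ltnW.
have s0 : 0 < s.
  rewrite /s; apply: Rmult_lt_0_compat => //; have := Rinv_0_lt_compat _ a0; lra.
pose H := C1 * s ^ p.+1 * INR n ^ (k - p.+1) / INR #|Inj|.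
have nk0 : 0 <= INR n ^ (k - p.+1) by apply: pow_le; exact: pos_INR.
have H0 : 0 <= H.
  rewrite /H /Rdiv; apply: Rmult_le_pos; last by left; apply: Rinv_0_lt_compat.
  apply: Rmult_le_pos => //; apply: Rmult_le_pos; [lra| apply: pow_le; lra].
have hH : forall X : {set 'I_n}, INR #|X| < s -> INR (hc p.+1 Inj X) <= H * INR #|Inj|.
  move=> X hX.
  have h1 : (hc p.+1 Inj X <= 'C(k, p.+1) * #|X| ^ p.+1 * n ^ (k - p.+1))%N.
    apply: leq_trans (card_hits_le X _); [apply: subset_leq_card; exact: subsetIr | lia].
  apply: Rle_trans (le_INR _ _ (leP h1)) _.
  rewrite !mult_INR !INR_expn -/C1.
  have hx : INR #|X| ^ p.+1 <= s ^ p.+1 by apply: pow_incr; split; [exact: pos_INR| lra].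
  have -> : H * INR #|Inj| = C1 * s ^ p.+1 * INR n ^ (k - p.+1) by rewrite /H; field; lra.
  apply: Rmult_le_compat_r => //; apply: Rmult_le_compat_l => //; lra.
have hpot := @pot0 n k m p.+1 Inj lam s H ltac:(lra) ltac:(lia) hH U ltac:(lia) H0.
have hU : INR #|U| <= INR un by apply: le_INR; apply/leP; apply: card_U_le.
have hm : INR m <= mu * INR n ^ p.+1 / INR un ^ p.
  rewrite /m /m_of e1 e2; apply: floor_le.
  apply: Rmult_le_pos; first by apply: Rmult_le_pos; [lra| apply: pow_le; exact: pos_INR].
  by left; apply: Rinv_0_lt_compat; apply: pow_lt.
have ek : INR n ^ k = INR n ^ p.+1 * INR n ^ (k - p.+1).
  by rewrite -pow_add; congr (_ ^ _); lia.
have eq1 : mu * INR n ^ p.+1 / INR un ^ p * H = alpha * INR un * (INR n ^ k / INR #|Inj|).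
  rewrite /H /alpha /s ek Rpow_mult_distr /=.
  have : 0 < INR un ^ p by apply: pow_lt.
  move: I0; move: (INR #|Inj|) => I I0' hp; field; repeat split; lra.
have hnI : INR n ^ k / INR #|Inj| <= th.
  rewrite eI in I0 *; apply: (Rmult_le_reg_r (INR (n ^_ k))) => //.
  rewrite /Rdiv Rmult_assoc Rinv_l; lra.
have hmH : INR m * H <= alpha' * INR un.
  apply: Rle_trans (Rmult_le_compat_r _ _ _ H0 hm) _; rewrite eq1.
  have -> : alpha' * INR un = alpha * INR un * th by rewrite /th; field; lra.
  apply: Rmult_le_compat_l => //; nra.
have ed : exp lam - 1 = (beta - alpha') / alpha' by rewrite ey /y; field; lra.
have hba : alpha' < beta by rewrite /alpha'; lra.
have d0 : 0 <= exp lam - 1 by rewrite ed; apply: Rmult_le_pos; [lra| left; apply: Rinv_0_lt_compat; lra].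
have hbad : INR #|[set w : {ffun 'I_m -> {ffun 'I_k -> 'I_n}} |
      [forall a0, w a0 \in Inj] && ~~ Rltb (INR #|cl p.+1 w U|) s]|
    <= exp (- g * INR un) * INR #|Inj| ^ m.
  apply: Rle_trans hpot _.
  rewrite Rpow_mult_distr.
  have h1 : (1 + H * (exp lam - 1)) ^ m <= exp (INR m * (H * (exp lam - 1))).
    rewrite -exp_pow; apply: pow_incr; split; last exact: exp_ineq1_le.
    have := Rmult_le_pos _ _ H0 d0; lra.
  have h2 : - lam * ((s - INR #|U|) / INR (k - p.+1)) + INR m * (H * (exp lam - 1)) <= - g * INR un.
    have h3 : beta * INR un <= (s - INR #|U|) / INR (k - p.+1).
      rewrite /beta /s -/cc /Rdiv; have -> : / a * / cc * INR un = (/ a * INR un) * / cc by ring.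
      apply: Rmult_le_compat_r; first by left; apply: Rinv_0_lt_compat.
      move: hU; move: (INR #|U|) => x hx; nra.
    have h4 : INR m * (H * (exp lam - 1)) <= (beta - alpha') * INR un.
      rewrite -Rmult_assoc; apply: Rle_trans (Rmult_le_compat_r _ _ _ d0 hmH) _.
      rewrite ed; right; field; lra.
    rewrite /g; nra.
  have h5 := exp_le h2; rewrite exp_plus in h5.
  have I0m : 0 <= INR #|Inj| ^ m by apply: pow_le; lra.
  have E0 : 0 <= exp (- lam * ((s - INR #|U|) / INR (k - p.+1))) by left; apply: exp_pos.
  have P0 : 0 <= (1 + H * (exp lam - 1)) ^ m by apply: pow_le; have := Rmult_le_pos _ _ H0 d0; lra.
  move: h1 h5 I0m E0 P0.
  move: (exp (- lam * ((s - INR #|U|) / INR (k - p.+1)))) ((1 + H * (exp lam - 1)) ^ m) (INR #|Inj| ^ m) (exp (INR m * (H * (exp lam - 1)))) (exp (- g * INR un)).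
  move=> A B C D E' hh1 hh5 hC hA hB.
  have hAB : A * B <= E' by apply: Rle_trans hh5; apply: Rmult_le_compat_l.
  have := Rmult_le_compat_r _ _ _ hC hAB; move=> hh; apply: Rle_trans hh; right; ring.
pose G := [set w : {ffun 'I_m -> {ffun 'I_k -> 'I_n}} * {ffun 'I_n -> 'I_q} |
   [forall a0, injectiveb (w.1 a0)] && Rltb (INR #|cl p.+1 w.1 U|) s].
exists G; split; [|split].
- by apply/subsetP => w; rewrite !inE => /andP[].
- pose Tups := [set t : {ffun 'I_m -> {ffun 'I_k -> 'I_n}} | [forall a0, injectiveb (t a0)]].
  pose Bs := [set t : {ffun 'I_m -> {ffun 'I_k -> 'I_n}} | Rltb (INR #|cl p.+1 t U|) s].
  have eT : #|Tups| = (#|Inj| ^ m)%N.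
    have -> : #|Tups| = #|[set t : {ffun 'I_m -> {ffun 'I_k -> 'I_n}} |
                 [forall a0, t a0 \in [pred v | v \in Inj]]]|.
      by apply: eq_card => t; rewrite !inE; apply: eq_forallb => bb; rewrite !inE.
    rewrite card_fam (eq_bigr (fun _ => #|Inj|)); last by move=> *; apply: eq_card => v; rewrite !inE.
    by rewrite prod_nat_const card_ord.
  have eID := cardsID Bs Tups.
  have eGood : Tups :&: Bs = [set t : {ffun 'I_m -> {ffun 'I_k -> 'I_n}} | [forall a0, injectiveb (t a0)] && Rltb (INR #|cl p.+1 t U|) s].
    by apply/setP => t; rewrite !inE.
  have eBad : Tups :\: Bs = [set w : {ffun 'I_m -> {ffun 'I_k -> 'I_n}} |
      [forall a0, w a0 \in Inj] && ~~ Rltb (INR #|cl p.+1 w U|) s].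
    apply/setP => t; rewrite !inE andbC; congr (_ && _); apply: eq_forallb => bb; by rewrite inE.
  rewrite eGood eBad in eID.
  rewrite /sample_space /G.
  rewrite (@card_prod_fst _ _ (fun t : {ffun 'I_m -> {ffun 'I_k -> 'I_n}} => [forall a0, injectiveb (t a0)])).
  rewrite (@card_prod_fst _ _ (fun t : {ffun 'I_m -> {ffun 'I_k -> 'I_n}} =>
     [forall a0, injectiveb (t a0)] && Rltb (INR #|cl p.+1 t U|) s)).
  rewrite -/Tups eT.
  move: eID hbad; rewrite eT.
  set Gd := #|[set t : {ffun 'I_m -> {ffun 'I_k -> 'I_n}} | _ && Rltb _ _]|.
  set Bd := #|[set t : {ffun 'I_m -> {ffun 'I_k -> 'I_n}} | _ && ~~ Rltb _ _]|.
  move=> eID hbad.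
  have -> : Gd = (#|Inj| ^ m - Bd)%N by lia.
  rewrite !mult_INR minus_INR; last by lia.
  rewrite INR_expn.
  have Q0 := pos_INR #|{ffun 'I_n -> 'I_q}|.
  move: hbad Q0; move: (INR Bd) (INR #|{ffun 'I_n -> 'I_q}|) (INR #|Inj| ^ m) (exp (- g * INR un)).
  move=> b Q J e hb hQ; nra.
- move=> w; rewrite inE => /andP[_ hw].
  apply: (@lp_ok q n k l m p.+2 un (F n) w.1 w.2 (cl p.+1 w.1 U)).
  + exact: hq.
  + by move=> a1; have [_ h] := hF n a1.
  + exact: cl_closed.
  + move=> i hi; apply: (subsetP (@cl_sub _ _ _ p.+1 w.1 U)); by rewrite inE.
  + by apply/RltbP.
Qed.
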